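(* Let $n,d\in\mathbb{Z}_+$ and $m=\tfrac{n^2+n+2}{2}$. Consider $n+md$ qubits, split as an $n$-qubit register holding $x=(x_0,\dots,x_{n-1})\in\mathbb{F}_2^n$, a $d$-qubit register holding $y=(y_0,\dots,y_{d-1})\in\mathbb{F}_2^d$, and $(m-1)d$ ancilla qubits. Let $U_{\mathrm{QUBO}}$ be any unitary with $$U_{\mathrm{QUBO}}\ket{x}\ket{y}\ket{0}^{\otimes(m-1)d}=\ket{x}\ket{y}\bigotimes_{j=0}^{n-1}\bigotimes_{a=0}^{d-1}\Big(\ket{y_a\oplus x_j}\bigotimes_{k=j+1}^{n-1}\ket{y_a\oplus x_j\oplus x_k}\Big)$$ for all $x,y$. Then such a $U_{\mathrm{QUBO}}$ can be implemented by a quantum circuit consisting only of CNOT gates, of depth $O(\log_2(n)+\log_2(d))$.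
   Context: $\oplus$ denotes addition modulo 2 (XOR). $\ket{x}=\ket{x_0}\cdots\ket{x_{n-1}}$ denotes the computational basis state of a bit string. *)

(* Defs.v *)
(* CNOT circuits acting on computational basis
   states, represented as bit strings (seq bool), qubit i = i-th entry. *)
From mathcomp Require Import all_boot.
Set Implicit Arguments. Unset Strict Implicit. Unset Printing Implicit Defensive.

(* A CNOT gate is a pair (control, target). *)
Definition cnot := (nat * nat)%type.
(* A layer: a set of CNOT gates applied in parallel (on disjoint qubits). *)
Definition layer := seq cnot.
Definition circuit := seq layer.

Definition depth (c : circuit) : nat := size c.

Definition valid_gate (N : nat) (g : cnot) : bool :=
  [&& g.1 < N, g.2 < N & g.1 != g.2].

Definition valid_layer (N : nat) (L : layer) : bool :=
  all (valid_gate N) L && uniq (flatten [seq [:: g.1; g.2] | g <- L]).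

Definition valid_circuit (N : nat) (c : circuit) : bool :=
  all (valid_layer N) c.

Definition apply_gate (g : cnot) (s : seq bool) : seq bool :=
  set_nth false s g.2 (addb (nth false s g.2) (nth false s g.1)).

(* Gates within a layer are disjoint, hence commute; apply them in list order. *)
Definition apply_layer (L : layer) (s : seq bool) : seq bool :=
  foldl (fun t g => apply_gate g t) s L.

Definition run_circuit (c : circuit) (s : seq bool) : seq bool :=
  foldl (fun t L => apply_layer L t) s c.

Definition qubo_m (n : nat) : nat := (n ^ 2 + n + 2) %/ 2.

Definition qubo_input (n d : nat) (x y : seq bool) : seq bool :=
  x ++ y ++ nseq ((qubo_m n - 1) * d) false.

Definition qubo_output (n d : nat) (x y : seq bool) : seq bool :=
  x ++ y ++
  flatten [seq flatten [seq
      (addb (nth false y a) (nth false x j)) ::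
      [seq addb (addb (nth false y a) (nth false x j)) (nth false x k)
         | k <- iota j.+1 (n - j.+1)]
    | a <- iota 0 d] | j <- iota 0 n].

(* Main.v *)
Require Import Defs.
From mathcomp Require Import all_boot zify.
From Stdlib Require Import FunctionalExtensionality.
Set Implicit Arguments. Unset Strict Implicit. Unset Printing Implicit Defensive.


Definition fgate (g : cnot) (f : nat -> bool) : nat -> bool :=
  fun i => if i == g.2 then f i (+) f g.1 else f i.
Definition flayer (L : layer) f := foldl (fun h g => fgate g h) f L.
Definition frun (c : circuit) f := foldl (fun h L => flayer L h) f c.

Lemma nth_apply_gate g s : nth false (apply_gate g s) = fgate g (nth false s).
Proof. apply: functional_extensionality => i. rewrite /apply_gate nth_set_nth /= /fgate. by case: eqP => [->|]. Qed.

Lemma nth_apply_layer L s : nth false (apply_layer L s) = flayer L (nth false s).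
Proof.
elim: L s => [|g L IH] s //=.
by rewrite /apply_layer /= -/(apply_layer L _) IH nth_apply_gate.
Qed.

Lemma nth_run c s : nth false (run_circuit c s) = frun c (nth false s).
Proof.
elim: c s => [|L c IH] s //=.
by rewrite /run_circuit /= -/(run_circuit c _) IH nth_apply_layer.
Qed.

Definition ends (L : layer) := flatten [seq [:: g.1; g.2] | g <- L].

Lemma size_apply_layer N L s : all (valid_gate N) L -> size s = N -> size (apply_layer L s) = N.
Proof.
elim: L s => [|g L IH] s //= /andP[vg vL] sz.
rewrite /apply_layer /= -/(apply_layer L _); apply: IH => //.
rewrite /apply_gate size_set_nth; case/and3P: vg => _ h _. rewrite sz; exact/maxn_idPr.
Qed.

Lemma size_run N c s : valid_circuit N c -> size s = N -> size (run_circuit c s) = N.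
Proof.
elim: c s => [|L c IH] s //= /andP[vL vc] sz.
rewrite /run_circuit /= -/(run_circuit c _); apply: IH => //.
case/andP: vL => vL _; exact: size_apply_layer.
Qed.

Lemma ends_cons g L : ends (g :: L) = g.1 :: g.2 :: ends L.
Proof. by []. Qed.
Lemma ends_cat L1 L2 : ends (L1 ++ L2) = ends L1 ++ ends L2.
Proof. by rewrite /ends map_cat flatten_cat. Qed.

Lemma mem_ends1 g L : g \in L -> g.1 \in ends L.
Proof. elim: L => [|h L IH] //=; rewrite in_cons ends_cons !in_cons => /orP[/eqP->|/IH->]; rewrite ?eqxx ?orbT //. Qed.
Lemma mem_ends2 g L : g \in L -> g.2 \in ends L.
Proof. elim: L => [|h L IH] //=; rewrite in_cons ends_cons !in_cons => /orP[/eqP->|/IH->]; rewrite ?eqxx ?orbT //. Qed.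
Lemma tgt_ends L i : i \in [seq g.2 | g <- L] -> i \in ends L.
Proof. by case/mapP => g gL ->; apply: mem_ends2. Qed.

Lemma flayer_notgt L f i : i \notin [seq g.2 | g <- L] -> flayer L f i = f i.
Proof.
elim: L f => [|g L IH] f //=; rewrite in_cons negb_or => /andP[ne ni].
rewrite IH // /fgate (negbTE ne) //.
Qed.

Lemma flayer_tgt L f c t : uniq (ends L) -> (c, t) \in L -> flayer L f t = f t (+) f c.
Proof.
elim: L f => [|g L IH] f //; rewrite ends_cons /= !in_cons negb_or => /andP[/andP[n12 n1L]] /andP[n2L uL].
case/orP => [/eqP eg|cL].
  rewrite flayer_notgt; last by apply: contra n2L; rewrite -eg => /tgt_ends.
  by rewrite /fgate -eg /= eqxx.
rewrite IH // /fgate.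
have -> : (t == g.2) = false by apply/negbTE; apply: contra n2L => /eqP<-; exact: (mem_ends2 cL).
have -> : (c == g.2) = false by apply/negbTE; apply: contra n2L => /eqP<-; exact: (mem_ends1 cL).
by [].
Qed.

Lemma ctl_notgt L g : uniq (ends L) -> g \in L -> g.1 \notin [seq h.2 | h <- L].
Proof.
elim: L => [|h L IH] //; rewrite ends_cons /= !in_cons negb_or => /andP[/andP[n12 n1L]] /andP[n2L uL].
case/orP => [/eqP->|gL]; rewrite negb_or.
  by rewrite n12 /=; apply: contra n1L => /tgt_ends.
rewrite IH // andbT; apply: contra n2L => /eqP<-; exact: mem_ends1.
Qed.

Lemma flayerK L f : uniq (ends L) -> flayer L (flayer L f) = f.
Proof.
move=> uL; apply: functional_extensionality => i.
case: (boolP (i \in [seq g.2 | g <- L])) => [/mapP[g gL ->]|ni]; last by rewrite !flayer_notgt.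
have gL' : (g.1, g.2) \in L by case: g gL.
rewrite (flayer_tgt _ uL gL') (flayer_tgt _ uL gL') (flayer_notgt _ (ctl_notgt uL gL)).
by rewrite -addbA addbb addbF.
Qed.

Definition goodc (c : circuit) := all (fun L => uniq (ends L)) c.

Lemma frun_cat c1 c2 f : frun (c1 ++ c2) f = frun c2 (frun c1 f).
Proof. by rewrite /frun foldl_cat. Qed.

Lemma frun_revK c f : goodc c -> frun (rev c) (frun c f) = f.
Proof.
elim: c f => [|L c IH] f //= /andP[uL gc].
by rewrite rev_cons -cats1 frun_cat IH //= flayerK.
Qed.

Definition xorf (f h : nat -> bool) := fun i => f i (+) h i.

Lemma fgate_lin g f h : fgate g (xorf f h) = xorf (fgate g f) (fgate g h).
Proof.
apply: functional_extensionality => i; rewrite /fgate /xorf.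
by case: (i == g.2) => //; case: (f i); case: (h i); case: (f g.1); case: (h g.1).
Qed.

Lemma frun_lin c f h : frun c (xorf f h) = xorf (frun c f) (frun c h).
Proof.
elim: c f h => [|L c IH] f h //=.
have -> : flayer L (xorf f h) = xorf (flayer L f) (flayer L h).
  by elim: L f h {IH} => [|g L IHL] f h //=; rewrite fgate_lin IHL.
exact: IH.
Qed.

Lemma frun_notgt c f i : (forall L, L \in c -> i \notin [seq g.2 | g <- L]) -> frun c f i = f i.
Proof.
elim: c f => [|L c IH] f //= H.
rewrite IH; first by rewrite flayer_notgt // H // mem_head.
by move=> L' L'c; apply: H; rewrite in_cons L'c orbT.
Qed.


Lemma uniq_flatten_in (A T : eqType) (xs : seq A) (h : A -> seq T) x :
  uniq (flatten (map h xs)) -> x \in xs -> uniq (h x).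
Proof.
elim: xs => [|y xs IH] //=; rewrite cat_uniq in_cons => /and3P[uy _ ur] /orP[/eqP->|xr] //.
exact: IH.
Qed.

Lemma uniq_flatten_sub (A T : eqType) (xs : seq A) (h e : A -> seq T) :
  uniq (flatten (map h xs)) ->
  (forall x, x \in xs -> uniq (h x) -> uniq (e x) /\ {subset e x <= h x}) ->
  uniq (flatten (map e xs)).
Proof.
elim: xs => [|y xs IH] //= U H; move: (U); rewrite cat_uniq => /and3P[uy hy ur].
have [uey sey] := H y (mem_head _ _) uy.
rewrite cat_uniq uey IH //=; last by move=> x xr; apply: H; rewrite in_cons xr orbT.
rewrite andbT; apply/hasPn => z /flattenP[s /mapP[x xr ->] zx].
apply/negP => zy.
have xin : x \in y :: xs by rewrite in_cons xr orbT.
have [_ sex] := H x xin (uniq_flatten_in ur xr).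
have zf : z \in flatten (map h xs) by apply/flattenP; exists (h x); [exact: map_f | exact: sex].
by move/hasPn: hy => /(_ z zf); rewrite /= (sey _ zy).
Qed.

Lemma uniq_flatten_disj (T : eqType) (tss : seq (seq T)) ts ts' x :
  uniq (flatten tss) -> ts \in tss -> ts' \in tss -> x \in ts -> x \in ts' -> ts = ts'.
Proof.
elim: tss => [|u us IH] //=; rewrite cat_uniq => /and3P[uu hu ur].
rewrite !in_cons => /orP[/eqP->|tsr] /orP[/eqP->|tsr'] // xt xt'.
- have xf : x \in flatten us by apply/flattenP; exists ts'.
  by move/hasPn: hu => /(_ x xf); rewrite /= xt.
- have xf : x \in flatten us by apply/flattenP; exists ts.
  by move/hasPn: hu => /(_ x xf); rewrite /= xt'.
- exact: IH.
Qed.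

Lemma aux_sub i a b : i < 0 + (b - a) -> i < b /\ i + a < b.
Proof. lia. Qed.

Definition dlayer r (ts : seq nat) : layer :=
  [seq (nth 0 ts i, nth 0 ts (i + 2 ^ r)) | i <- iota 0 (size ts - 2 ^ r) & i < 2 ^ r].
Definition dfam r (tss : seq (seq nat)) : layer := flatten [seq dlayer r ts | ts <- tss].
Definition dcirc K tss : circuit := [seq dfam r tss | r <- iota 0 K].

Lemma mem_dlayer r ts g : g \in dlayer r ts ->
  exists i, [/\ i < 2 ^ r, i + 2 ^ r < size ts & g = (nth 0 ts i, nth 0 ts (i + 2 ^ r))].
Proof.
case/mapP => i; rewrite mem_filter mem_iota => /andP[ir /andP[_ ilt]] ->.
exists i; split => //; lia.
Qed.

Lemma dlayer_mem r ts i : i < 2 ^ r -> i + 2 ^ r < size ts ->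
  (nth 0 ts i, nth 0 ts (i + 2 ^ r)) \in dlayer r ts.
Proof.
move=> ir ilt; apply: map_f; rewrite mem_filter mem_iota ir /=; lia.
Qed.

Lemma mem_dfam r tss g : g \in dfam r tss -> exists2 ts, ts \in tss & g \in dlayer r ts.
Proof. by case/flattenP => s /mapP[ts tsin ->] gin; exists ts. Qed.

Lemma ends_map2 (F : nat -> nat) b s :
  ends [seq (F i, F (i + b)) | i <- s] = map F (flatten [seq [:: i; i + b] | i <- s]).
Proof. by elim: s => [|i s IH] //=; rewrite ends_cons IH. Qed.

Lemma uniq_pairs b s : 0 < b -> uniq s -> all (fun i => i < b) s ->
  uniq (flatten [seq [:: i; i + b] | i <- s]).
Proof.
move=> b0; elim: s => [|i s IH] //= /andP[nis us] /andP[ib als].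
rewrite IH // andbT in_cons negb_or.
have nin : forall z, z \in flatten [seq [:: i0; i0 + b] | i0 <- s] -> exists2 j, j \in s & (z = j \/ z = j + b).
  move=> z /flattenP[t /mapP[j js ->]]; rewrite !in_cons orbF => /orP[/eqP->|/eqP->]; exists j => //; tauto.
apply/andP; split; first (apply/andP; split).
- rewrite neq_ltn; apply/orP; left; lia.
- apply/negP => /nin[j js [e|e]].
  + by move: nis; rewrite e js.
  + move/allP: als => /(_ j js); lia.
- apply/negP => /nin[j js [e|e]].
  + move/allP: als => /(_ j js); lia.
  + have ij : i = j by lia.
    by move: nis; rewrite ij js.
Qed.

Lemma uniq_ends_dlayer r ts : uniq ts ->
  uniq (ends (dlayer r ts)) /\ {subset ends (dlayer r ts) <= ts}.
Proof.
move=> uts; rewrite /dlayer ends_map2.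
set s := [seq i <- _ | _].
have sbound : forall j, j \in flatten [seq [:: i; i + 2 ^ r] | i <- s] -> j < size ts.
  move=> j /flattenP[t /mapP[i]]; rewrite mem_filter mem_iota => /andP[_ /andP[_ ilt]] -> .
  have [h1 h2] := aux_sub ilt.
  rewrite !in_cons orbF => /orP[/eqP->|/eqP->] //.
split.
- rewrite map_inj_in_uniq.
    apply: uniq_pairs; first by rewrite expn_gt0.
      by apply: filter_uniq; apply: iota_uniq.
    by apply/allP => i; rewrite mem_filter => /andP[].
  move=> i j /sbound ilt /sbound jlt /eqP; rewrite nth_uniq // => /eqP //.
- move=> z /mapP[j /sbound jlt ->]; exact: mem_nth.
Qed.


Lemma ends_flatten (A : Type) (F : A -> layer) xs :
  ends (flatten (map F xs)) = flatten (map (fun x => ends (F x)) xs).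
Proof. by elim: xs => [|x xs IH] //=; rewrite ends_cat IH. Qed.

Lemma uniq_in_flat (T : eqType) (tss : seq (seq T)) ts : uniq (flatten tss) -> ts \in tss -> uniq ts.
Proof. move=> U; apply: (uniq_flatten_in (h := fun ts => ts)); by rewrite map_id. Qed.

Lemma uniq_ends_dfam r tss : uniq (flatten tss) ->
  uniq (ends (dfam r tss)) /\ {subset ends (dfam r tss) <= flatten tss}.
Proof.
move=> U; rewrite /dfam ends_flatten; split.
  apply: (@uniq_flatten_sub _ _ tss (fun ts => ts)); first by rewrite map_id.
  by move=> ts _ uts; apply: uniq_ends_dlayer.
move=> z /flattenP[s /mapP[ts tsin ->] zs]; apply/flattenP; exists ts => //.
by case: (uniq_ends_dlayer r (uniq_in_flat U tsin)) => _; apply.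
Qed.

Lemma tgt_dfam r tss t : t \in [seq g.2 | g <- dfam r tss] ->
  exists2 ts, ts \in tss & exists i, [/\ i < 2 ^ r, i + 2 ^ r < size ts & t = nth 0 ts (i + 2 ^ r)].
Proof.
case/mapP => g /mem_dfam[ts tsin /mem_dlayer[i [h1 h2 ->]]] ->; exists ts => //; by exists i.
Qed.

Lemma dfam_tgt_in r tss t : t \in [seq g.2 | g <- dfam r tss] -> t \in flatten tss.
Proof.
case/tgt_dfam => ts tsin [i [_ h ->]]; apply/flattenP; exists ts => //; apply: mem_nth; lia.
Qed.

Lemma dcirc_S r tss : dcirc r.+1 tss = rcons (dcirc r tss) (dfam r tss).
Proof. by rewrite /dcirc -addn1 iotaD map_cat cats1. Qed.

Lemma lt_aux i q : (i < 2 * q) = (i < q) || (q <= i < 2 * q).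
Proof. apply/idP/idP; [move=> h; apply/orP; lia | move/orP; lia]. Qed.

Lemma dcirc_inv r tss d :
  uniq (flatten tss) ->
  (forall ts i, ts \in tss -> 0 < i < size ts -> d (nth 0 ts i) = false) ->
  (forall ts i, ts \in tss -> i < size ts ->
      frun (dcirc r tss) d (nth 0 ts i) = (i < 2 ^ r) && d (nth 0 ts 0)) /\
  (forall i, i \notin flatten tss -> frun (dcirc r tss) d i = d i).
Proof.
move=> U Hd; elim: r => [|r [IH1 IH2]].
  split => //= ts i tsin ilt; case: i ilt => [|i] ilt //=.
  by rewrite Hd.
rewrite dcirc_S -cats1 frun_cat /=.
have [uE _] := uniq_ends_dfam r U.
split; last first.
  move=> i ni; rewrite flayer_notgt; first exact: IH2.
  by apply: contra ni; apply: dfam_tgt_in.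
move=> ts i tsin ilt.
have uts : uniq ts := uniq_in_flat U tsin.
rewrite expnS lt_aux.
case: (boolP (2 ^ r <= i < 2 * 2 ^ r)) => [/andP[i1 i2]|nin].
  have e : i = (i - 2 ^ r) + 2 ^ r by lia.
  have gin : (nth 0 ts (i - 2 ^ r), nth 0 ts i) \in dfam r tss.
    apply/flattenP; exists (dlayer r ts); first exact: map_f.
    rewrite {2}e; apply: dlayer_mem; lia.
  have h1 : i - 2 ^ r < size ts by lia.
  rewrite (flayer_tgt _ uE gin) !IH1 //.
  have -> : (i < 2 ^ r) = false by apply/negbTE; rewrite -leqNgt.
  have -> : (i - 2 ^ r < 2 ^ r) = true by lia.
  by rewrite orbT.
rewrite flayer_notgt; first by rewrite IH1 // orbF.
apply/negP => /tgt_dfam[ts' ts'in [j [j1 j2 ej]]].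
have ets : ts = ts'.
  apply: (uniq_flatten_disj U tsin ts'in (x := nth 0 ts i)); first exact: mem_nth.
  by rewrite ej mem_nth.
rewrite -ets in ej j2.
move/eqP: ej; rewrite nth_uniq // => /eqP ej.
by move: nin; rewrite ej; apply/negP/negPn; apply/andP; split; lia.
Qed.

Lemma dcirc_zero K tss d :
  uniq (flatten tss) -> (forall ts, ts \in tss -> size ts <= 2 ^ K) ->
  (forall ts i, ts \in tss -> 0 < i < size ts -> d (nth 0 ts i) = false) ->
  (forall ts t, ts \in tss -> t \in ts -> frun (dcirc K tss) d t = d (nth 0 ts 0)) /\
  (forall i, i \notin flatten tss -> frun (dcirc K tss) d i = d i).
Proof.
move=> U Hs Hd; have [H1 H2] := dcirc_inv K U Hd; split => // ts t tsin tin.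
rewrite -(nth_index 0 tin) H1 //; last by rewrite index_mem.
have := Hs _ tsin; have := index_mem t ts; rewrite tin => h1 h2.
by have -> : index t ts < 2 ^ K by lia.
Qed.

Lemma goodc_dcirc K tss : uniq (flatten tss) -> goodc (dcirc K tss).
Proof.
move=> U; apply/allP => L /mapP[r _ ->]; by case: (uniq_ends_dfam r U).
Qed.

Lemma dcirc_tgt K tss L i : L \in dcirc K tss -> i \in [seq g.2 | g <- L] -> i \in flatten tss.
Proof. by case/mapP => r _ -> /dfam_tgt_in. Qed.


Definition cl1 (p : nat * seq nat) : layer := if p.2 is t :: _ then [:: (p.1, t)] else [::].
Definition clayer (ps : seq (nat * seq nat)) : layer := flatten (map cl1 ps).
Definition stage K (ps : seq (nat * seq nat)) : circuit :=
  rev (dcirc K (map snd ps)) ++ clayer ps :: dcirc K (map snd ps).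

Definition hp (p : nat * seq nat) := p.1 :: p.2.

Section Stage.
Variable ps : seq (nat * seq nat).
Hypothesis U : uniq (flatten (map hp ps)).

Lemma U_snd : uniq (flatten (map snd ps)).
Proof.
apply: (uniq_flatten_sub U) => p _ up; split; first by case/andP: up.
by move=> z zp; rewrite /hp in_cons zp orbT.
Qed.

Lemma src_notin p : p \in ps -> p.1 \notin flatten (map snd ps).
Proof.
move=> pin; apply/negP => /flattenP[s /mapP[p' p'in ->] inp'].
have e : hp p = hp p'.
  apply: (uniq_flatten_disj (tss := map hp ps) (x := p.1)) => //; try exact: map_f.
    by rewrite mem_head.
  by rewrite /hp in_cons inp' orbT.
have up : uniq (hp p) := uniq_flatten_in U pin.
have ep : p = p' by move: e; case: (p) => a b; case: (p') => a' b' /= [-> ->].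
by move: up inp'; rewrite ep /hp /= => /andP[] /negP.
Qed.

Lemma uniq_ends_clayer : uniq (ends (clayer ps)) /\ {subset ends (clayer ps) <= flatten (map hp ps)}.
Proof.
rewrite /clayer ends_flatten; split.
  apply: (uniq_flatten_sub U) => p _; rewrite /cl1 /hp; case: p => a [|t s] //= /andP[].
  rewrite in_cons negb_or => /andP[nat _] _; split; first by rewrite /= in_cons negb_or nat.
  by move=> z; rewrite ends_cons /= !in_cons orbF => /orP[]->; rewrite ?orbT.
move=> z /flattenP[s /mapP[p pin ->]]; rewrite /cl1; case: p pin => a [|t l] //= pin.
rewrite ends_cons /= !in_cons orbF => zz; apply/flattenP; exists (hp (a, t :: l)); first exact: map_f.
by rewrite /hp /= !in_cons; case/orP: zz => ->; rewrite ?orbT.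
Qed.

Lemma clayer_mem p t l : p \in ps -> p.2 = t :: l -> (p.1, t) \in clayer ps.
Proof.
move=> pin e; apply/flattenP; exists (cl1 p); first exact: map_f.
by rewrite /cl1 e mem_head.
Qed.

Lemma clayer_tgt t : t \in [seq g.2 | g <- clayer ps] ->
  exists2 p, p \in ps & exists l, p.2 = t :: l.
Proof.
case/mapP => g /flattenP[s /mapP[p pin ->]]; rewrite /cl1.
case: p pin => a [|t' l] //= pin; rewrite in_cons orbF => /eqP-> ->.
by exists (a, t' :: l) => //; exists l.
Qed.

Lemma clayer_tgt_in t : t \in [seq g.2 | g <- clayer ps] -> t \in flatten (map snd ps).
Proof.
case/clayer_tgt => p pin [l e]; apply/flattenP; exists p.2; first exact: map_f.
by rewrite e mem_head.
Qed.

Lemma stage_sem K f : (forall p, p \in ps -> size p.2 <= 2 ^ K) ->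
  (forall p t, p \in ps -> t \in p.2 -> frun (stage K ps) f t = f t (+) f p.1) /\
  (forall i, i \notin flatten (map snd ps) -> frun (stage K ps) f i = f i).
Proof.
move=> Hs.
have Us := U_snd.
set tss := map snd ps.
set D := dcirc K tss.
have gD : goodc D := goodc_dcirc K Us.
have [uC _] := uniq_ends_clayer.
set g := frun (rev D) f.
set h := flayer (clayer ps) g.
set dl := xorf h g.
have eh : h = xorf g dl.
  apply: functional_extensionality => i; rewrite /dl /xorf.
  by case: (h i); case: (g i).
have eout : frun (stage K ps) f = xorf f (frun D dl).
  rewrite /stage frun_cat /= -/tss -/D -/h eh frun_lin /g.
  have gD' : goodc (rev D) by rewrite /goodc all_rev.
  by have := frun_revK f gD'; rewrite revK => ->.
have Hd : forall ts i, ts \in tss -> 0 < i < size ts -> dl (nth 0 ts i) = false.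
  move=> ts i tsin /andP[i0 ilt]; rewrite /dl /xorf /h flayer_notgt ?addbb //.
  apply/negP => /clayer_tgt[p pin [l e]].
  have ets : ts = p.2.
    apply: (uniq_flatten_disj Us tsin (map_f _ pin) (x := nth 0 ts i)); first exact: mem_nth.
    by rewrite e mem_head.
  have uts : uniq ts := uniq_in_flat Us tsin.
  move: e; rewrite -ets => e.
  have : nth 0 ts 0 = nth 0 ts i by rewrite {1}e.
  have s0 : 0 < size ts by case: (ts) ilt.
  move/eqP; rewrite nth_uniq // eq_sym => /eqP ei; by move: i0; rewrite ei.
have Hsz : forall ts, ts \in tss -> size ts <= 2 ^ K.
  by move=> ts /mapP[p pin ->]; apply: Hs.
have [Z1 Z2] := dcirc_zero Us Hsz Hd.
rewrite eout /xorf; split.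
  move=> p t pin tin; rewrite (Z1 p.2) //; last exact: map_f.
  case ep: p.2 tin => [|t0 l] // _; rewrite /= /dl /xorf /h.
  rewrite (flayer_tgt _ uC (clayer_mem pin ep)) /g.
  rewrite (@frun_notgt _ _ p.1).
    by case: (frun (rev D) f t0); case: (f p.1); case: (f t).
  move=> L; rewrite mem_rev => LD; apply: contra (src_notin pin).
  exact: dcirc_tgt LD.
move=> i ni; rewrite Z2 // /dl /xorf /h flayer_notgt ?addbb ?addbF //.
by apply: contra ni; apply: clayer_tgt_in.
Qed.

Lemma valid_of_ends N L : uniq (ends L) -> (forall z, z \in ends L -> z < N) -> valid_layer N L.
Proof.
move=> uL HN; rewrite /valid_layer uL andbT; apply/allP => g gL.
rewrite /valid_gate !HN ?(mem_ends1 gL) ?(mem_ends2 gL) //=.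
elim: L uL gL {HN} => [|g' L IH] //; rewrite ends_cons /= !in_cons negb_or => /andP[/andP[n12 _]] /andP[n2L uL].
case/orP => [/eqP->|gL] //; exact: IH.
Qed.

Lemma stage_valid K N : (forall z, z \in flatten (map hp ps) -> z < N) -> valid_circuit N (stage K ps).
Proof.
move=> HN; have Us := U_snd.
have HN' : forall z, z \in flatten (map snd ps) -> z < N.
  move=> z /flattenP[s /mapP[p pin ->] zs]; apply: HN; apply/flattenP; exists (hp p); first exact: map_f.
  by rewrite /hp in_cons zs orbT.
have vD : valid_circuit N (dcirc K (map snd ps)).
  apply/allP => L /mapP[r _ ->]; have [u s] := uniq_ends_dfam r Us.
  by apply: valid_of_ends => // z /s; apply: HN'.
rewrite /valid_circuit all_cat all_rev /= -!/(valid_circuit _ _) vD andbT /=.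
have [u s] := uniq_ends_clayer.
by apply: valid_of_ends => // z /s; apply: HN.
Qed.

End Stage.

Lemma size_stage K ps : size (stage K ps) = (2 * K).+1.
Proof. by rewrite /stage size_cat /= size_rev size_map size_iota; lia. Qed.


Definition lbl := ((nat * nat) * nat)%type.
Definition blk n j a : seq lbl := [seq ((j, a), k) | k <- j :: iota j.+1 (n - j.+1)].
Definition lab (n d : nat) : seq lbl :=
  flatten [seq flatten [seq blk n j a | a <- iota 0 d] | j <- iota 0 n].

Lemma uniq_flatten_key (A B : eqType) (s : seq A) (F : A -> seq B) (key : B -> A) :
  uniq s -> (forall x, x \in s -> uniq (F x) /\ forall y, y \in F x -> key y = x) ->
  uniq (flatten (map F s)).
Proof.
elim: s => [|x s IH] //= /andP[xs us] H.
have [ux kx] := H x (mem_head _ _).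
rewrite cat_uniq ux IH //=; last by move=> z zs; apply: H; rewrite in_cons zs orbT.
rewrite andbT; apply/hasPn => z /flattenP[t /mapP[x' x's ->] zt]; apply/negP => zx.
have x's' : x' \in x :: s by rewrite in_cons x's orbT.
have [_ kx'] := H x' x's'.
by move: xs; rewrite -(kx _ zx) (kx' _ zt) x's.
Qed.

Lemma uniq_lab n d : uniq (lab n d).
Proof.
apply: (uniq_flatten_key (key := fun l : lbl => l.1.1)); first exact: iota_uniq.
move=> j _; split; last first.
  by move=> y /flattenP[s /mapP[a _ ->]] /mapP[k _ ->].
apply: (uniq_flatten_key (key := fun l : lbl => l.1.2)); first exact: iota_uniq.
move=> a _; split; last by move=> y /mapP[k _ ->].
rewrite map_inj_uniq; last by move=> k k' [].
by rewrite /= iota_uniq mem_iota ltnn.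
Qed.

Lemma mem_lab n d (l : lbl) : l \in lab n d -> [/\ l.1.1 < n, l.1.2 < d & l.2 < n].
Proof.
case/flattenP => s /mapP[j]; rewrite mem_iota => /andP[_ jn] ->.
case/flattenP => t /mapP[a]; rewrite mem_iota => /andP[_ ad] -> /mapP[k].
rewrite in_cons mem_iota => kin ->; split => //=.
case/orP: kin => [/eqP->|/andP[_ h]] //; lia.
Qed.

Lemma size_flat_map (A B : Type) (F : A -> seq B) s :
  size (flatten (map F s)) = sumn (map (fun x => size (F x)) s).
Proof. by elim: s => [|x s IH] //=; rewrite size_cat IH. Qed.

Lemma sumn_const (A : Type) c (s : seq A) : sumn (map (fun _ => c) s) = c * size s.
Proof. by elim: s => [|x s IH] /=; [rewrite muln0 | rewrite IH mulnS]. Qed.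

Lemma sumn_tri n : sumn [seq n - j | j <- iota 0 n] = qubo_m n - 1.
Proof.
elim: n => [|n IH]; first by rewrite /qubo_m.
rewrite -addn1 iotaD /= add0n map_cat sumn_cat /= addn0.
have -> : [seq n + 1 - j | j <- iota 0 n] = [seq (n - j) + 1 | j <- iota 0 n].
  by apply/eq_in_map => j; rewrite mem_iota => /andP[_ h]; lia.
have -> : sumn [seq n - j + 1 | j <- iota 0 n] = sumn [seq n - j | j <- iota 0 n] + n.
  have gen : forall s : seq nat, sumn [seq n - j + 1 | j <- s] = sumn [seq n - j | j <- s] + size s.
    by elim => [|x s IHs] //=; rewrite IHs; lia.
  by rewrite gen size_iota.
rewrite IH /qubo_m -!mulnn; nia.
Qed.

Lemma size_lab n d : size (lab n d) = (qubo_m n - 1) * d.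
Proof.
rewrite /lab size_flat_map -sumn_tri mulnC.
have -> : [seq size (flatten [seq blk n x a | a <- iota 0 d]) | x <- iota 0 n] = [seq d * (n - j) | j <- iota 0 n].
  apply/eq_in_map => j; rewrite mem_iota => /andP[_ jn].
  rewrite size_flat_map.
  have -> : [seq size (blk n j a) | a <- iota 0 d] = [seq n - j | a <- iota 0 d].
    by apply: eq_map => a; rewrite /blk size_map /= size_iota; lia.
  by rewrite sumn_const size_iota mulnC.
by elim: (iota 0 n) => [|x s IHs] /=; [rewrite muln0 | rewrite IHs mulnDr].
Qed.

Definition pos n d (l : lbl) := n + d + index l (lab n d).
Definition kps n d (ks : seq nat) (sg : nat -> nat) (kp : lbl -> nat) : seq (nat * seq nat) :=
  [seq (sg k, map (pos n d) [seq l <- lab n d | kp l == k]) | k <- ks].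

Lemma pos_inj n d l l' : l \in lab n d -> l' \in lab n d -> pos n d l = pos n d l' -> l = l'.
Proof. by move=> h h' /addnI e; rewrite -(nth_index l h) e nth_index. Qed.

Lemma pos_lt n d l : l \in lab n d -> pos n d l < n + d + size (lab n d).
Proof. by move=> h; rewrite /pos ltn_add2l index_mem. Qed.

Lemma pos_ge n d l : n + d <= pos n d l.
Proof. exact: leq_addr. Qed.

Lemma mem_kps n d ks sg kp z : z \in flatten (map hp (kps n d ks sg kp)) ->
  exists2 k, k \in ks & (z = sg k \/ exists2 l, l \in lab n d & kp l = k /\ z = pos n d l).
Proof.
case/flattenP => s /mapP[p /mapP[k kin ->] ->]; rewrite /hp /= in_cons => /orP[/eqP->|].
  by exists k => //; left.
case/mapP => l; rewrite mem_filter => /andP[/eqP e lin] ->; exists k => //; right; by exists l.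
Qed.

Lemma kps_uniq n d ks sg kp : uniq ks -> {in ks &, injective sg} ->
  (forall k, k \in ks -> sg k < n + d) -> uniq (flatten (map hp (kps n d ks sg kp))).
Proof.
elim: ks => [|k ks IH] // /andP[kks uks] inj Hsg.
have inj' : {in ks &, injective sg} by move=> a b ha hb; apply: inj; rewrite in_cons ?ha ?hb orbT.
have Hsg' : forall k', k' \in ks -> sg k' < n + d by move=> k' h; apply: Hsg; rewrite in_cons h orbT.
have sgk := Hsg k (mem_head _ _).
set P := map (pos n d) [seq l <- lab n d | kp l == k].
have -> : flatten (map hp (kps n d (k :: ks) sg kp)) = (sg k :: P) ++ flatten (map hp (kps n d ks sg kp)) by [].
rewrite cat_uniq IH // andbT cons_uniq.
apply/andP; split.
  apply/andP; split.
    apply/negP => /mapP[l _ e]; move: sgk; rewrite e; have := pos_ge n d l; lia.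
  rewrite map_inj_in_uniq; first by apply: filter_uniq; apply: uniq_lab.
  by move=> l l'; rewrite !mem_filter => /andP[_ h] /andP[_ h']; apply: pos_inj.
apply/hasPn => z /mem_kps[k' k'in H]; rewrite /= in_cons negb_or /P; apply/andP; split.
  case: H => [->|[l' _ [_ ->]]].
    apply/negP => /eqP/inj; rewrite in_cons k'in orbT mem_head => /(_ isT isT) ek.
    by move: kks; rewrite -ek k'in.
  apply/negP => /eqP e; move: sgk; rewrite -e; have := pos_ge n d l'; lia.
apply/negP => /mapP[l]; rewrite mem_filter => /andP[/eqP ekl lin] ez.
case: H ez => [->|[l' l'in [ek' ->]]] ez.
  have := Hsg' _ k'in; rewrite ez; have := pos_ge n d l; lia.
have ell := pos_inj l'in lin ez.
by move: kks; rewrite -ekl -ell ek' k'in.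
Qed.

Lemma mem_kps_snd n d ks sg kp z : z \in flatten (map snd (kps n d ks sg kp)) ->
  exists2 l, l \in lab n d & kp l \in ks /\ z = pos n d l.
Proof.
case/flattenP => s /mapP[p /mapP[k kin ->] ->] /mapP[l]; rewrite mem_filter => /andP[/eqP e lin] ->.
by exists l => //; rewrite e.
Qed.

Lemma kstage_sem n d K ks sg kp f :
  uniq ks -> {in ks &, injective sg} -> (forall k, k \in ks -> sg k < n + d) ->
  size (lab n d) <= 2 ^ K ->
  (forall i, i < n + d -> frun (stage K (kps n d ks sg kp)) f i = f i) /\
  (forall l, l \in lab n d -> frun (stage K (kps n d ks sg kp)) f (pos n d l) =
      f (pos n d l) (+) (if kp l \in ks then f (sg (kp l)) else false)).
Proof.
move=> uks inj Hsg HK.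
have U := kps_uniq kp uks inj Hsg.
have Hs : forall p, p \in kps n d ks sg kp -> size p.2 <= 2 ^ K.
  move=> p /mapP[k _ ->] /=; rewrite size_map size_filter; apply: leq_trans HK; exact: count_size.
have [S1 S2] := stage_sem U f Hs.
split.
  move=> i ilt; apply: S2; apply/negP => /mem_kps_snd[l _ [_ e]].
  by move: ilt; rewrite e; have := pos_ge n d l; lia.
move=> l lin; case: ifP => kin.
  rewrite (S1 (sg (kp l), map (pos n d) [seq l' <- lab n d | kp l' == kp l])) //.
    by apply/mapP; exists (kp l).
  by apply: map_f; rewrite mem_filter eqxx.
rewrite S2 ?addbF //; apply/negP => /mem_kps_snd[l' l'in [kin' e]].
by move: kin; rewrite (pos_inj lin l'in e) kin'.
Qed.

Lemma kstage_valid n d K ks sg kp :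
  uniq ks -> {in ks &, injective sg} -> (forall k, k \in ks -> sg k < n + d) ->
  valid_circuit (n + d + size (lab n d)) (stage K (kps n d ks sg kp)).
Proof.
move=> uks inj Hsg; apply: stage_valid; first exact: kps_uniq.
move=> z /mem_kps[k kin [->|[l lin [_ ->]]]]; last exact: pos_lt.
by have := Hsg k kin; lia.
Qed.

Definition kB n (l : lbl) := if l.1.1 == l.2 then n else l.2.
Definition kA (l : lbl) := l.1.1.
Definition kY (l : lbl) := l.1.2.

Definition qcirc n d K : circuit :=
  stage K (kps n d (iota 0 n) id (kB n)) ++ stage K (kps n d (iota 0 n) id kA) ++
  stage K (kps n d (iota 0 d) (addn n) kY).

Definition qval (x y : seq bool) (l : lbl) : bool :=
  if l.2 == l.1.1 then addb (nth false y l.1.2) (nth false x l.1.1)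
  else addb (addb (nth false y l.1.2) (nth false x l.1.1)) (nth false x l.2).

Lemma qubo_output_eq n d x y : qubo_output n d x y = x ++ y ++ map (qval x y) (lab n d).
Proof.
rewrite /qubo_output /lab map_flatten -map_comp; congr (x ++ y ++ flatten _).
apply: eq_map => j /=; rewrite map_flatten -map_comp; congr flatten.
apply: eq_map => a /=; rewrite /blk /= /qval /= eqxx; congr (_ :: _).
rewrite -map_comp; apply/eq_in_map => k; rewrite mem_iota => /andP[h _] /=.
by have -> : (k == j) = false by apply/negbTE; rewrite neq_ltn h orbT.
Qed.

Lemma qubo_m_ge1 n : 1 <= qubo_m n.
Proof. rewrite /qubo_m -mulnn; nia. Qed.

Lemma valid_cat N c1 c2 : valid_circuit N (c1 ++ c2) = valid_circuit N c1 && valid_circuit N c2.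
Proof. exact: all_cat. Qed.

Lemma inj_id (ks : seq nat) : {in ks &, injective id}.
Proof. by move=> a b _ _. Qed.
Lemma inj_addn n (ks : seq nat) : {in ks &, injective (addn n)}.
Proof. by move=> a b _ _ /addnI. Qed.

Theorem mainTheorem2 :
  exists C : nat, forall n d : nat, 0 < n -> 0 < d ->
    exists circ : circuit,
      valid_circuit (n + qubo_m n * d) circ /\
      depth circ <= C * (trunc_log 2 n + trunc_log 2 d + 1) /\
      forall x y : seq bool, size x = n -> size y = d ->
        run_circuit circ (qubo_input n d x y) = qubo_output n d x y.
Proof.
exists 21 => n d n0 d0.
set a := (trunc_log 2 n).+1; set b := (trunc_log 2 d).+1.
set K := a + a + b.
have eN : n + qubo_m n * d = n + d + size (lab n d).
  rewrite size_lab; have := qubo_m_ge1 n; nia.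
have HK : size (lab n d) <= 2 ^ K.
  rewrite size_lab.
  have h1 : qubo_m n - 1 <= n * n by rewrite /qubo_m -mulnn; nia.
  have hn : n <= 2 ^ a by apply: ltnW; apply: trunc_log_ltn.
  have hd : d <= 2 ^ b by apply: ltnW; apply: trunc_log_ltn.
  apply: (leq_trans (leq_mul h1 (leqnn d))).
  by rewrite /K !expnD; apply: leq_mul => //; apply: leq_mul.
have Hn : forall k, k \in iota 0 n -> id k < n + d by move=> k; rewrite mem_iota; lia.
have Hd : forall k, k \in iota 0 d -> addn n k < n + d by move=> k; rewrite mem_iota; lia.
have V : valid_circuit (n + qubo_m n * d) (qcirc n d K).
  rewrite eN /qcirc valid_cat; apply/andP; split; last (rewrite valid_cat; apply/andP; split).
  - apply: kstage_valid; [exact: iota_uniq | exact: inj_id | exact: Hn].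
  - apply: kstage_valid; [exact: iota_uniq | exact: inj_id | exact: Hn].
  - apply: kstage_valid; [exact: iota_uniq | exact: inj_addn | exact: Hd].
exists (qcirc n d K); split; [exact: V|split].
- rewrite /depth /qcirc size_cat size_stage size_cat !size_stage /K /a /b; lia.
move=> x y sx sy.
have sin : size (qubo_input n d x y) = n + qubo_m n * d.
  rewrite /qubo_input !size_cat size_nseq sx sy; have := qubo_m_ge1 n; nia.
apply: (@eq_from_nth _ false).
  rewrite (size_run V sin).
  by rewrite qubo_output_eq !size_cat size_map sx sy eN addnA.
move=> i; rewrite (size_run V sin).
move=> ilt; rewrite nth_run /qcirc frun_cat frun_cat.
set f0 := nth false (qubo_input n d x y).
have [B1 B2] := kstage_sem (kB n) f0 (iota_uniq 0 n) (@inj_id _) Hn HK.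
set f1 := frun _ f0.
have [A1 A2] := kstage_sem kA f1 (iota_uniq 0 n) (@inj_id _) Hn HK.
set f2 := frun _ f1.
have [Y1 Y2] := kstage_sem kY f2 (iota_uniq 0 d) (@inj_addn n _) Hd HK.
rewrite qubo_output_eq catA.
have sxy : size (x ++ y) = n + d by rewrite size_cat sx sy.
case: (ltnP i (n + d)) => hi.
  rewrite Y1 // /f2 A1 // /f1 B1 // /f0 /qubo_input catA !nth_cat sxy hi //.
have [p ep] : exists p, i = n + d + p by exists (i - (n + d)); lia.
have plt : p < size (lab n d) by move: ilt; rewrite eN ep; lia.
set l := nth ((0, 0), 0) (lab n d) p.
have lin : l \in lab n d by apply: mem_nth.
have ipos : i = pos n d l by rewrite ep /pos index_uniq // uniq_lab.
rewrite nth_cat sxy ltnNge hi /= (nth_map ((0, 0), 0)); last by rewrite ep addKn.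
have -> : i - (n + d) = p by rewrite ep addKn.
rewrite -/l ipos Y2 // /f2 A2 // /f1 B2 //.
have [j_lt a_lt k_lt] := mem_lab lin.
have f0x : forall j, j < n -> f0 j = nth false x j.
  by move=> j jn; rewrite /f0 /qubo_input nth_cat sx jn.
have f0y : forall a', a' < d -> f0 (n + a') = nth false y a'.
  move=> a' ad; rewrite /f0 /qubo_input nth_cat sx ltnNge leq_addr /= nth_cat sy.
  by rewrite addKn ad.
have f0p : f0 (pos n d l) = false.
  rewrite /f0 /qubo_input catA nth_cat sxy ltnNge /pos leq_addr /= nth_nseq.
  by case: ifP.
rewrite f0p /kA /kY /kB !mem_iota /= j_lt a_lt /=.
rewrite A1; last by lia.
rewrite B1; last by lia.
rewrite /f1 B1; last by lia.
rewrite (f0x l.1.1) // (f0y l.1.2) //.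
rewrite /qval; case: eqP => [ejk|njk].
  by rewrite ejk eqxx /= add0n ltnn; case: (nth false y l.1.2); case: (nth false x l.2).
have -> : (l.2 == l.1.1) = false by apply/eqP => e; apply: njk; rewrite e.
rewrite add0n k_lt /= f0x //.
by case: (nth false y l.1.2); case: (nth false x l.1.1); case: (nth false x l.2).
Qed.
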